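(* Let $G=(V,E)$ be a directed graph with $n=|V|$ and $A$ a node-weighting, and let $1\le\alpha\le\log n$. Suppose some $A$-respecting $h$-length symmetric demand $D$ has $h\cdot s$-length sparsity at most $\phi$ with respect to some $h\cdot s$-length moving cut $C$. Then the $\alpha$-exponential demand $D^{\alpha}_{h,A}$ has $\frac{h\cdot s}{2}$-length sparsity at most $2^{8\alpha+1}\phi$ with respect to the same cut $C$, i.e. $|C|/\mathrm{sep}_{hs/2}(C,D^\alpha_{h,A})\le 2^{8\alpha+1}\phi$.
   Context: $G$ has positive integer edge lengths $\ell(e)$ and capacities $u(e)$; $\mathrm{dist}(u,v)$ is the directed distance in $G$ and $\overline{\mathrm{dist}}(u,v)=\mathrm{dist}(u,v)+\mathrm{dist}(v,u)$. Node-weighting $A\ge0$; demand $D:V\times V\to\mathbb{R}_{\ge0}$, $|D|=\sum D(u,v)$; $A$-respecting: $\max\{\sum_wD(v,w),\sum_wD(w,v)\}\le A(v)$; $h$-length: $D(u,v)>0\Rightarrow\mathrm{dist}(u,v)\le h$; symmetric: $D(u,v)=D(v,u)$. An $H$-length moving cut is $C:E\to\{0,\tfrac1H,\dots\}\cap[0,1]$, $|C|=\sum_eu(e)C(e)$; $G-C$ has lengths $\ell(e)+H\cdot C(e)$; $\mathrm{sep}_{h'}(C,D)=\sum_{(u,v):\mathrm{dist}_{G-C}(u,v)>h'}D(u,v)$; $h'$-length sparsity $\mathrm{spars}_{h'}(C,D)=|C|/\mathrm{sep}_{h'}(C,D)$. Exponential weights (for $1\le\alpha\le\log n$): $w_h^\alpha(u,v)=1$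 if $u=v$; $=2^{-\alpha\overline{\mathrm{dist}}(u,v)/h}$ if $u\neq v$ and $\overline{\mathrm{dist}}(u,v)\le\frac{2h\log_2 n}{\alpha}$; $=0$ otherwise. $w_h^\alpha(u)=\sum_{b\in V}w_h^\alpha(u,b)$, $M_h^\alpha(u,v)=w_h^\alpha(u,v)/w_h^\alpha(u)$, and $D^\alpha_{h,A}(u,v)=A(u)M_h^\alpha(u,v)+A(v)M_h^\alpha(v,u)$. *)

(* Defs.v *)
From HB Require Import structures.
From mathcomp Require Import all_boot all_order all_algebra.
From mathcomp Require Import all_classical all_reals.
From mathcomp Require Import ereal exp.
Set Implicit Arguments. Unset Strict Implicit. Unset Printing Implicit Defensive.
Import Order.TTheory GRing.Theory Num.Theory.
Local Open Scope ring_scope.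

Section Defs.
Variable R : realType.
Variables (V E : finType) (src tgt : E -> V).

Fixpoint walk (x y : V) (p : seq E) : bool :=
  match p with
  | [::] => x == y
  | e :: p' => (src e == x) && walk (tgt e) y p'
  end.

(* directed distance w.r.t. the length function len; +oo if unreachable *)
Definition dist (len : E -> R) (x y : V) : \bar R :=
  ereal_inf [set ((\sum_(e <- p) len e)%:E) | p in [set p | walk x y p]].

Definition distbar (len : E -> R) (x y : V) : \bar R :=
  (dist len x y + dist len y x)%E.

Definition is_moving_cut (H : R) (C : E -> R) : Prop :=
  forall e, 0 <= C e <= 1 /\ exists k : nat, C e = k%:R / H.

Definition cut_size (cap : E -> nat) (C : E -> R) : R :=
  \sum_(e : E) (cap e)%:R * C e.

(* lengths of G - C : l(e) + H * C(e) *)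
Definition cut_len (len : E -> nat) (H : R) (C : E -> R) (e : E) : R :=
  (len e)%:R + H * C e.

Definition sep (len : E -> nat) (H : R) (C : E -> R) (h' : R)
  (D : V -> V -> R) : R :=
  \sum_(u : V) \sum_(v : V)
     (if (h'%:E < dist (cut_len len H C) u v)%E then D u v else 0).

Definition nonneg_demand (D : V -> V -> R) : Prop := forall u v, 0 <= D u v.
Definition A_respecting (A : V -> R) (D : V -> V -> R) : Prop :=
  forall v, Num.max (\sum_(w : V) D v w) (\sum_(w : V) D w v) <= A v.
Definition h_length (len : E -> nat) (h : R) (D : V -> V -> R) : Prop :=
  forall u v, 0 < D u v -> (dist (fun e => (len e)%:R) u v <= h%:E)%E.
Definition symmetric_demand (D : V -> V -> R) : Prop :=
  forall u v, D u v = D v u.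

Definition log2 (x : R) : R := ln x / ln 2.

Definition expw (len : E -> nat) (h alpha : R) (u b : V) : R :=
  let db := distbar (fun e => (len e)%:R) u b in
  if u == b then 1
  else if (db <= (2 * h * log2 #|V|%:R / alpha)%:E)%E
       then powR 2 (- (alpha * fine db / h))
       else 0.

Definition expw_tot (len : E -> nat) (h alpha : R) (u : V) : R :=
  \sum_(b : V) expw len h alpha u b.

Definition expM (len : E -> nat) (h alpha : R) (u v : V) : R :=
  expw len h alpha u v / expw_tot len h alpha u.

Definition exp_demand (len : E -> nat) (h alpha : R) (A : V -> R) (u v : V) : R :=
  A u * expM len h alpha u v + A v * expM len h alpha v u.

End Defs.

(* Main.v *)
Set Warnings "-all".
Require Import Defs.
From HB Require Import structures.
From mathcomp Require Import all_boot all_order all_algebra.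
From mathcomp Require Import all_classical all_reals.
From mathcomp Require Import ereal exp.
From mathcomp Require Import ring lra.
Import Order.TTheory GRing.Theory Num.Theory.
Set Implicit Arguments. Unset Strict Implicit. Unset Printing Implicit Defensive.
Local Open Scope ring_scope.
Lemma walk_cat (V E : finType) (src tgt : E -> V) x y z p q :
  walk src tgt x y p -> walk src tgt y z q -> walk src tgt x z (p ++ q).
Proof.
elim: p x => [|e p IH] x /=; first by move/eqP->.
by case/andP=> -> /IH H /H.
Qed.

Lemma dist_le (R : realType) (V E : finType) (src tgt : E -> V) (len : E -> R) x y p :
  walk src tgt x y p -> (dist src tgt len x y <= (\sum_(e <- p) len e)%:E)%E.
Proof. by move=> w; apply: ereal_inf_lbound; exists p. Qed.

Lemma dist_ge0 (R : realType) (V E : finType) (src tgt : E -> V) (len : E -> R) x y :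
  (forall e, 0 <= len e) -> (0 <= dist src tgt len x y)%E.
Proof.
move=> H; apply/ereal_infP => _ [p _ <-]; rewrite lee_fin sumr_ge0 //.
Qed.

Lemma dist_xx (R : realType) (V E : finType) (src tgt : E -> V) (len : E -> R) x :
  (forall e, 0 <= len e) -> dist src tgt len x x = 0%E.
Proof.
move=> H; apply/le_anti; rewrite dist_ge0 // andbT.
by have := @dist_le R V E src tgt len x x [::] (eqxx x); rewrite big_nil.
Qed.

Lemma dist_tri (R : realType) (V E : finType) (src tgt : E -> V) (len : E -> R) x y z :
  (forall e, 0 <= len e) ->
  (dist src tgt len x z <= dist src tgt len x y + dist src tgt len y z)%E.
Proof.
move=> H.
have g1 := dist_ge0 src tgt x y H; have g2 := dist_ge0 src tgt y z H.
case Ex: (dist src tgt len x y) => [a| |]; rewrite Ex in g1.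
- case Ey: (dist src tgt len y z) => [b| |]; rewrite Ey in g2.
  + apply/lee_addgt0Pr => e e0.
    have /ereal_inf_lt [_ [p wp <-] hp] : (dist src tgt len x y < (a + e/2)%:E)%E.
      by rewrite Ex lte_fin; lra.
    have /ereal_inf_lt [_ [q wq <-] hq] : (dist src tgt len y z < (b + e/2)%:E)%E.
      by rewrite Ey lte_fin; lra.
    apply: (le_trans (dist_le len (walk_cat wp wq))).
    rewrite big_cat /= -!EFinD lee_fin.
    move: hp hq; rewrite !lte_fin => hp hq; lra.
  + by rewrite addey // leey.
  + done.
- have ny : dist src tgt len y z != -oo%E by apply: contraTneq g2 => ->.
  by rewrite addye // leey.
- done.
Qed.

Definition wt (R : realType) (a h r : R) := powR 2 (-(a * r / h)).

Lemma two_neq0 (R : realType) : (2 : R) != 0. Proof. by rewrite pnatr_eq0. Qed.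

Lemma wtD (R : realType) (a h r1 r2 : R) : wt a h (r1 + r2) = wt a h r1 * wt a h r2.
Proof.
rewrite /wt -powRD; last by apply/implyP => _; exact: two_neq0.
by rewrite mulrDr mulrDl opprD.
Qed.

Lemma wt_le (R : realType) (a h r1 r2 : R) : 0 <= a -> 0 < h -> r1 <= r2 -> wt a h r2 <= wt a h r1.
Proof.
move=> a0 h0 r12; apply: ler_powR; first by rewrite ler1n.
by rewrite lerN2 ler_pM2r ?invr_gt0 // ler_wpM2l.
Qed.

Lemma wt_ge0 (R : realType) (a h r : R) : 0 <= wt a h r.
Proof. exact: powR_ge0. Qed.

Lemma wt0 (R : realType) (a h : R) : wt a h 0 = 1.
Proof. by rewrite /wt mulr0 mul0r oppr0 powRr0. Qed.

Lemma wt_le1 (R : realType) (a h r : R) : 0 <= a -> 0 < h -> 0 <= r -> wt a h r <= 1.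
Proof. by move=> a0 h0 r0; rewrite -(wt0 a h); apply: wt_le. Qed.

Lemma wt_2h (R : realType) (a h : R) : h != 0 -> wt a h (2 * h) = (powR 2 (2 * a))^-1.
Proof. by move=> h0; rewrite /wt -powRN; congr powR; field. Qed.

Lemma ln2_gt0 (R : realType) : 0 < ln (2 : R).
Proof. by apply: ln_gt0; rewrite ltr1n. Qed.

Lemma pow_log2 (R : realType) (n : R) : 0 < n -> powR 2 (log2 n) = n.
Proof.
move=> n0; rewrite /powR (negbTE (two_neq0 R)) /log2 divfK ?lnK //.
by rewrite gt_eqF // ln2_gt0.
Qed.

Lemma wt_L (R : realType) (a h n : R) : a != 0 -> h != 0 -> 0 < n ->
  wt a h (2 * h * log2 n / a) = (n ^+ 2)^-1.
Proof.
move=> a0 h0 n0; rewrite /wt.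
have -> : - (a * (2 * h * log2 n / a) / h) = - (log2 n + log2 n).
  by field; rewrite h0 a0.
rewrite (powRN 2 (log2 n + log2 n)) powRD ?pow_log2 ?expr2 //.
by apply/implyP => _; exact: two_neq0.
Qed.

Lemma fineE_ge0 (R : realType) (x : \bar R) (r : R) :
  (0 <= x)%E -> (x <= r%:E)%E -> x = (fine x)%:E.
Proof. by case: x. Qed.

Lemma claim (R : realType) (V : finType) (db : V -> V -> \bar R) (h a : R)
 (db_ge0 : forall x y, (0 <= db x y)%E) (db_xx : forall x, db x x = 0%E)
 (db_tri : forall x y z, (db x z <= db x y + db y z)%E)
 (h_pos : 0 < h) (a1 : 1 <= a) (alog : a <= log2 (#|V|%:R : R))
 (w : V -> V -> R)
 (wE : forall x b, w x b = if (db x b <= (2 * h * log2 #|V|%:R / a)%:E)%E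
                           then wt a h (fine (db x b)) else 0)
 (u v : V) (duv : (db u v <= (2 * h)%:E)%E) (dvu : (db v u <= (2 * h)%:E)%E)
 (P Q : pred V) (Pv : P v) (PQ : forall b, P b || Q b) :
 (4 * powR 2 (2 * a) ^+ 2)^-1 <=
   \sum_b (if P b then w u b / \sum_c w u c else 0) +
   \sum_b (if Q b then w v b / \sum_c w v c else 0).
Proof.
set n := #|V|%:R : R.
set L := 2 * h * log2 n / a.
set K := powR 2 (2 * a).
have n0 : 0 < n by rewrite ltr0n; apply/card_gt0P; exists u.
have n1 : 1 <= n by rewrite ler1n; apply/card_gt0P; exists u.
have a0 : 0 < a by lra.
have hne : h != 0 by rewrite gt_eqF.
have ane : a != 0 by rewrite gt_eqF.
have L2h : 2 * h <= L.
  have : 1 <= log2 n / a by rewrite ler_pdivlMr // mul1r.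
  rewrite /L -mulrA => H; rewrite -{1}(mulr1 (2 * h)) ler_wpM2l //; lra.
have L0 : 0 <= L by lra.
have K2 : 2 <= K.
  rewrite /K -{1}(@powRr1 _ 2) ?ler0n //; apply: ler_powR; [by rewrite ler1n | lra].
have K0 : 0 < K by lra.
have wt2h : wt a h (2 * h) = K^-1 by rewrite wt_2h.
have wtL2h : wt a h (L - 2 * h) = K / n ^+ 2.
  rewrite /wt.
  have -> : - (a * (L - 2 * h) / h) = 2 * a + - (log2 n + log2 n).
    by rewrite /L; field; rewrite hne ane.
  have tw : forall r s : R, (r + s == 0) ==> ((2:R) != 0) by move=> *; apply/implyP => _; exact: two_neq0.
  by rewrite powRD // (powRN 2 (log2 n + log2 n)) powRD // pow_log2 // expr2.
have fE : forall x b r, (db x b <= r%:E)%E -> db x b = (fine (db x b))%:E.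
  by move=> x b r; apply: fineE_ge0.
have fge0 : forall x b, 0 <= fine (db x b).
  by move=> x b; apply: fine_ge0.
have w_ge0 : forall x b, 0 <= w x b.
  by move=> x b; rewrite wE; case: ifP => // _; exact: wt_ge0.
have w_le1 : forall x b, w x b <= 1.
  move=> x b; rewrite wE; case: ifP => _; last exact: ler01.
  by apply: wt_le1 => //; lra.
have w_xx : forall x, w x x = 1.
  by move=> x; rewrite wE db_xx lee_fin L0 /= wt0.
set W := fun x => \sum_c w x c.
have W_ge1 : forall x, 1 <= W x.
  by move=> x; rewrite /W (bigD1 x) //= w_xx lerDl sumr_ge0.
have W0 : forall x, 0 < W x by move=> x; apply: lt_le_trans (W_ge1 x); exact: ltr01.
have W_le : forall x, W x <= n.
  move=> x; apply: le_trans (ler_sum _ (fun c _ => w_le1 x c)) _.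
  by rewrite sumr_const.
have Fa : forall b, (db u b <= (L - 2 * h)%:E)%E -> K^-1 * w u b <= w v b.
  move=> b hb; have eub := fE _ _ _ hb; set t := fine (db u b) in eub.
  have hvb : (db v b <= (2 * h + t)%:E)%E.
    by apply: le_trans (db_tri v u b) _; rewrite eub EFinD leeD2r.
  have tle : t <= L - 2 * h by move: hb; rewrite eub lee_fin.
  have hvbL : (db v b <= L%:E)%E.
    by apply: le_trans hvb _; rewrite lee_fin; lra.
  have hubL : (db u b <= L%:E)%E.
    by apply: le_trans hb _; rewrite lee_fin; lra.
  rewrite (wE v b) (wE u b) hvbL hubL -/t -wt2h -wtD.
  apply: wt_le; [lra | done |].
  by move: hvb; rewrite (fE _ _ _ hvbL) lee_fin.
have Fb : forall b, w v b <= K * w u b + K / n ^+ 2.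
  move=> b; have Kn0 : 0 <= K / n ^+ 2 by rewrite divr_ge0 ?exprn_ge0 //; lra.
  rewrite (wE v b); case: ifP => hvL; last first.
    by rewrite addr_ge0 // mulr_ge0 // ?w_ge0 //; lra.
  have evb := fE _ _ _ hvL; set t' := fine (db v b) in evb *.
  have hub : (db u b <= (2 * h + t')%:E)%E.
    by apply: le_trans (db_tri u v b) _; rewrite evb EFinD leeD2r.
  rewrite (wE u b); case: ifP => huL.
    have tle : fine (db u b) <= 2 * h + t' by move: hub; rewrite (fE _ _ _ huL) lee_fin.
    have H : wt a h (2 * h + t') <= wt a h (fine (db u b)) by apply: wt_le => //; lra.
    rewrite wtD wt2h mulrC -ler_pdivlMr ?invr_gt0 // in H.
    apply: le_trans (_ : K * wt a h (fine (db u b)) <= _); last by rewrite lerDl.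
    by move: H; rewrite invrK mulrC.
  have : (L%:E < (2 * h + t')%:E)%E.
    by apply: lt_le_trans hub; rewrite ltNge huL.
  rewrite lte_fin => Lt; rewrite mulr0 add0r -wtL2h.
  apply: wt_le => //; lra.
have Kn0 : 0 <= K / n ^+ 2 by rewrite divr_ge0 ?exprn_ge0 //; lra.
have Fc : forall b, ~~ (db u b <= (L - 2 * h)%:E)%E -> w u b <= K / n ^+ 2.
  move=> b hb; rewrite wE; case: ifP => huL //.
  move: hb; rewrite (fE _ _ _ huL) lee_fin -ltNge => hb.
  by rewrite -wtL2h; apply: wt_le => //; lra.
have Wvu : W v <= 2 * K * W u.
  have -> : 2 * K * W u = K * W u + K * W u by ring.
  apply: le_trans (_ : \sum_b (K * w u b + K / n ^+ 2) <= _).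
    by apply: ler_sum => b _; exact: Fb.
  rewrite big_split /= -mulr_sumr sumr_const lerD2l.
  have -> : (K / n ^+ 2) *+ #|V| = K / n by rewrite -mulr_natr -/n expr2; field; rewrite gt_eqF.
  apply: le_trans (_ : K <= _); last by rewrite ler_peMr ?W_ge1 //; lra.
  by rewrite ler_pdivrMr // ler_peMr //; lra.
have Kne : K != 0 by rewrite gt_eqF.
have Wne : forall x, W x != 0 by move=> x; rewrite gt_eqF.
have M_ge0 : forall x b, 0 <= w x b / W x.
  by move=> x b; rewrite divr_ge0 ?w_ge0 // ltW.
have S_ge0 : forall x (p : pred V), 0 <= \sum_b (if p b then w x b / W x else 0).
  by move=> x p; apply: sumr_ge0 => b _; case: ifP.
have [small|large] := leP (2 * K) n; last first.
  apply: le_trans (_ : w u v / W u <= _); last first.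
    rewrite -[w u v / W u]addr0; apply: lerD; last exact: S_ge0.
    by rewrite (bigD1 v) //= Pv lerDl; apply: sumr_ge0 => b _; case: ifP.
  have wuv : K^-1 <= w u v.
    have duvL : (db u v <= L%:E)%E by apply: le_trans duv _; rewrite lee_fin.
    rewrite wE duvL -wt2h; apply: wt_le => //; first lra.
    by have := duv; rewrite (fE _ _ _ duv) lee_fin.
  apply: le_trans (_ : K^-1 / n <= _); last first.
    apply: ler_pM; rewrite ?invr_ge0 //; try lra.
    by rewrite lef_pV2 ?posrE ?W_le.
  rewrite -invfM lef_pV2 ?posrE; first nra.
    by rewrite mulr_gt0 // exprn_gt0.
  by rewrite mulr_gt0.
set c := (2 * K ^+ 2)^-1.
have c0 : 0 < c by rewrite invr_gt0 mulr_gt0 // exprn_gt0.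
have c1 : c <= 1 by rewrite invf_le1 ?mulr_gt0 ?exprn_gt0 //; nra.
set B := fun b => (db u b <= (L - 2 * h)%:E)%E.
apply: le_trans (_ : \sum_b (if B b then c * (w u b / W u) else 0) <= _); last first.
  rewrite -big_split; apply: ler_sum => b _ /=.
  case: ifP => hB; last by rewrite addr_ge0 //; case: ifP.
  have hu : c * (w u b / W u) <= w u b / W u by rewrite ler_piMl.
  have hv : c * (w u b / W u) <= w v b / W v.
    apply: le_trans (_ : K^-1 * w u b / (2 * K * W u) <= _).
      by rewrite le_eqVlt; apply/orP; left; apply/eqP; rewrite /c; field; rewrite Kne Wne.
    apply: ler_pM => //; first by rewrite mulr_ge0 ?w_ge0 // invr_ge0; lra.
      by rewrite invr_ge0 mulr_ge0 // ?(ltW (W0 u)); lra.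
      exact: Fa.
    by rewrite lef_pV2 ?posrE // mulr_gt0 //; lra.
  case/orP: (PQ b) => [Pb|Qb]; rewrite ?Pb ?Qb.
    by apply: le_trans hu _; rewrite lerDl; case: ifP.
  by apply: le_trans hv _; rewrite lerDr; case: ifP.
rewrite -big_mkcond -mulr_sumr /=.
have tot : \sum_b w u b / W u = 1 by rewrite -mulr_suml; exact: (mulfV (Wne u)).
rewrite (bigID B) /= in tot.
have rest : \sum_(b | ~~ B b) w u b / W u <= 2^-1.
  rewrite big_mkcond /=.
  apply: le_trans (_ : \sum_(b : V) K / n ^+ 2 <= _).
    apply: ler_sum => b _; case: ifP => hB //.
    apply: le_trans (Fc b hB).
    by rewrite ler_pdivrMr // ler_peMr ?w_ge0 ?W_ge1.
  rewrite sumr_const.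
  have -> : (K / n ^+ 2) *+ #|V| = K / n by rewrite -mulr_natr -/n expr2; field; rewrite gt_eqF.
  rewrite ler_pdivrMr // ; lra.
have -> : (4 * K ^+ 2)^-1 = c * 2^-1 by rewrite /c; field; rewrite Kne.
rewrite ler_wpM2l //; [lra | lra].
Qed.

Theorem lemma3p10 (R : realType) (V E : finType) (src tgt : E -> V)
  (len cap : E -> nat)
  (len_pos : forall e, (0 < len e)%N) (cap_pos : forall e, (0 < cap e)%N)
  (A : V -> R) (A_ge0 : forall v, 0 <= A v)
  (alpha h s phi : R)
  (alpha_ge1 : 1 <= alpha) (alpha_le : alpha <= log2 (#|V|%:R : R))
  (h_pos : 0 < h) (s_pos : 0 < s)
  (D : V -> V -> R) (C : E -> R)
  (D_nonneg : nonneg_demand D) (D_resp : A_respecting A D)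
  (D_hlen : h_length src tgt len h D) (D_sym : symmetric_demand D)
  (C_cut : is_moving_cut (h * s) C)
  (sep_pos : 0 < sep src tgt len (h * s) C (h * s) D)
  (spars : cut_size cap C / sep src tgt len (h * s) C (h * s) D <= phi) :
  let DA := exp_demand src tgt len h alpha A in
  0 < sep src tgt len (h * s) C (h * s / 2) DA /\
  cut_size cap C / sep src tgt len (h * s) C (h * s / 2) DA
    <= powR 2 (8 * alpha + 1) * phi.
Proof.
move=> DA.
have hs0 : 0 < h * s by rewrite mulr_gt0.
have lenR0 : forall e, 0 <= ((len e)%:R : R) by move=> e; rewrite ler0n.
have C0 : forall e, 0 <= C e by move=> e; case: (C_cut e) => /andP[].
have cl0 : forall e, 0 <= cut_len len (h * s) C e.
  by move=> e; rewrite /cut_len addr_ge0 // mulr_ge0 // ltW.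
set d := dist src tgt (fun e => (len e)%:R : R).
set d' := dist src tgt (cut_len len (h * s) C).
set db := distbar src tgt (fun e => (len e)%:R : R).
have db_ge0 : forall x y, (0 <= db x y)%E.
  by move=> x y; rewrite /db /distbar adde_ge0 // dist_ge0.
have db_xx : forall x, db x x = 0%E.
  by move=> x; rewrite /db /distbar dist_xx // adde0.
have db_tri : forall x y z, (db x z <= db x y + db y z)%E.
  move=> x y z; rewrite /db /distbar.
  apply: le_trans (leeD (dist_tri _ _ x y z lenR0) (dist_tri _ _ z y x lenR0)) _.
  by rewrite [(dist _ _ _ z y + _)%E]addeC addeACA.
have L0 : 0 <= 2 * h * log2 #|V|%:R / alpha.
  by apply: divr_ge0; [apply: mulr_ge0; lra | lra].
have wE : forall x b, expw src tgt len h alpha x b =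
    if (db x b <= (2 * h * log2 #|V|%:R / alpha)%:E)%E
    then wt alpha h (fine (db x b)) else 0.
  move=> x b; rewrite /expw /=; case: eqP => [<-|_] //.
  by rewrite db_xx lee_fin L0 /= wt0.
set M := expM src tgt len h alpha.
set Pu := fun u => \sum_b (if ((h * s / 2)%:E < d' u b)%E then M u b else 0).
set Qv := fun v => \sum_b (if ((h * s / 2)%:E < d' b v)%E then M v b else 0).
set K := powR 2 (2 * alpha).
set c := (4 * K ^+ 2)^-1.
have K2 : 2 <= K.
  rewrite /K -{1}(@powRr1 _ 2) ?ler0n //; apply: ler_powR; [by rewrite ler1n | lra].
have c0 : 0 < c by rewrite invr_gt0 mulr_gt0 // exprn_gt0; lra.
have M_ge0 : forall x b, 0 <= M x b.
  move=> x b; rewrite /M /expM divr_ge0 //.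
    by rewrite wE; case: ifP => // _; exact: wt_ge0.
  by apply: sumr_ge0 => i _; rewrite wE; case: ifP => // _; exact: wt_ge0.
have Pu0 : forall u, 0 <= Pu u by move=> u; apply: sumr_ge0 => b _; case: ifP.
have Qv0 : forall v, 0 <= Qv v by move=> v; apply: sumr_ge0 => b _; case: ifP.
have key : forall u v, 0 < D u v -> ((h * s)%:E < d' u v)%E -> c <= Pu u + Qv v.
  move=> u v Dp hsep.
  have duv : (db u v <= (2 * h)%:E)%E.
    have -> : 2 * h = h + h by ring.
    by rewrite EFinD; apply: leeD; apply: D_hlen; rewrite // D_sym.
  have dvu : (db v u <= (2 * h)%:E)%E.
    have -> : 2 * h = h + h by ring.
    by rewrite EFinD; apply: leeD; apply: D_hlen; rewrite // D_sym.
  apply: (claim db_ge0 db_xx db_tri h_pos alpha_ge1 alpha_le wE duv dvu).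
    by apply: lt_trans hsep; rewrite lte_fin; lra.
  move=> b; rewrite !ltNge -negb_and; apply/negP => /andP[h1 h2].
  have : (d' u v <= (h * s)%:E)%E.
    apply: le_trans (dist_tri _ _ u b v cl0) _.
    apply: le_trans (leeD h1 h2) _.
    by rewrite -EFinD lee_fin; lra.
  by rewrite leNgt hsep.
set sD := sep src tgt len (h * s) C (h * s) D.
set sDA := sep src tgt len (h * s) C (h * s / 2) DA.
have eDA : sDA = \sum_u A u * Pu u + \sum_v A v * Qv v.
  rewrite /sDA /sep.
  transitivity (\sum_x \sum_y
     ((if ((h * s / 2)%:E < d' x y)%E then A x * M x y else 0) +
      (if ((h * s / 2)%:E < d' x y)%E then A y * M y x else 0))).
    apply: eq_bigr => x _; apply: eq_bigr => y _.
    by case: ifP; rewrite ?addr0.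
  under eq_bigr do rewrite big_split /=.
  rewrite big_split /=; congr (_ + _).
    apply: eq_bigr => x _; rewrite /Pu mulr_sumr; apply: eq_bigr => y _.
    by case: ifP; rewrite ?mulr0.
  rewrite exchange_big /=.
  apply: eq_bigr => y _; rewrite /Qv mulr_sumr; apply: eq_bigr => x _.
  by case: ifP; rewrite ?mulr0.
have main : c * sD <= sDA.
  rewrite eDA /sD /sep mulr_sumr.
  apply: le_trans (_ : \sum_u \sum_v (D u v * Pu u + D u v * Qv v) <= _).
    apply: ler_sum => u _; rewrite mulr_sumr; apply: ler_sum => v _.
    case: ifP => hsep; last by rewrite mulr0 addr_ge0 // mulr_ge0.
    have := D_nonneg u v; rewrite le_eqVlt => /orP[/eqP Dz|Dp].
      by rewrite -Dz mulr0 !mul0r addr0.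
    rewrite -mulrDr [c * _]mulrC; apply: ler_wpM2l; [exact: ltW | exact: key].
  under eq_bigr do rewrite big_split /=.
  rewrite big_split /=; apply: lerD.
    apply: ler_sum => u _; rewrite -mulr_suml.
    apply: ler_wpM2r => //.
    by have := D_resp u; rewrite ge_max => /andP[].
  rewrite exchange_big /=; apply: ler_sum => v _; rewrite -mulr_suml.
  apply: ler_wpM2r => //.
  by have := D_resp v; rewrite ge_max => /andP[].
have sDA0 : 0 < sDA by apply: lt_le_trans main; rewrite mulr_gt0.
split => //.
have Cs0 : 0 <= cut_size cap C by apply: sumr_ge0 => e _; rewrite mulr_ge0 ?ler0n.
have phi0 : 0 <= phi by apply: le_trans spars; rewrite divr_ge0 // ltW.
have tw : forall r t : R, (r + t == 0) ==> ((2:R) != 0).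
  by move=> *; apply/implyP => _; exact: two_neq0.
have P8 : c^-1 <= powR 2 (8 * alpha + 1).
  rewrite /c invrK.
  have -> : 8 * alpha + 1 = 2 * alpha + (2 * alpha + (2 * alpha + (2 * alpha + 1))) by ring.
  rewrite !powRD // powRr1 ?ler0n // -/K expr2.
  have KK : 4 <= K * K by nra.
  nra.
apply: le_trans (_ : cut_size cap C / (c * sD) <= _).
  by rewrite ler_wpM2l // lef_pV2 ?posrE // mulr_gt0.
rewrite invfM mulrCA; apply: ler_pM => //.
  by rewrite invr_ge0 ltW.
by rewrite mulr_ge0 // invr_ge0 ltW.
Qed.
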